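(* Let $R$ be a subring of a ring $S$, and assume that every semiprime factor ring of $R$ and of $S$ is left or right Goldie and that the prime radical of every factor ring of $R$ and of $S$ is nilpotent. Then $\lambda$ is a left adjoint to $\rho$ if and only if for all $P\in\operatorname{Spec} S$ and $Q\in\operatorname{Spec} R$, $Q^S\subseteq P$ implies $Q\subseteq\sqrt{P\cap R}$.
   Context: $\operatorname{Spec}$ carries the Zariski topology, closed sets $V_A(X)=\{P\in\operatorname{Spec} A:P\supseteq X\}$; for $U\subseteq\operatorname{Spec} A$, $I(U)$ is the intersection of the primes in $U$; $\sqrt{K}$ is the prime radical of an ideal $K$. For an ideal $I$ of $R$, $I^S=\operatorname{ann}_S(S/SI)$. The functor $\lambda$ sends a closed $V\subseteq\operatorname{Spec} S$ to $V_R(I(V)\cap R)$; the functor $\rho$ sends a closed $V\subseteq\operatorname{Spec} R$ to $V_S(I(V)^S)$. ''$\lambda$ is a left adjoint to $\rho$'' means $\lambda U\subseteq V\iff U\subseteq\rho V$ for all closed $U\subseteq\operatorname{Spec} S$, $V\subseteq\operatorname{Spec} R$. *)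

(* Defs.v *)
(* Noncommutative (associative, unital) rings are
   mathcomp [pzRingType]s (the zero ring is allowed). Ideals and subsets
   are Prop-valued predicates. *)
From mathcomp Require Import all_boot all_algebra.
Set Implicit Arguments. Unset Strict Implicit. Unset Printing Implicit Defensive.
Import GRing.Theory.
Local Open Scope ring_scope.

Section RingDefs.
Variable A : pzRingType.

Definition incl (X Y : A -> Prop) : Prop := forall x, X x -> Y x.

Definition is_ideal (I : A -> Prop) : Prop :=
  [/\ I 0, (forall a b, I a -> I b -> I (a - b)),
      (forall r a, I a -> I (r * a)) & (forall r a, I a -> I (a * r))].

Definition is_right_ideal (I : A -> Prop) : Prop :=
  [/\ I 0, (forall a b, I a -> I b -> I (a - b)) & (forall r a, I a -> I (a * r))].

Definition is_left_ideal (I : A -> Prop) : Prop :=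
  [/\ I 0, (forall a b, I a -> I b -> I (a - b)) & (forall r a, I a -> I (r * a))].

Definition is_prime (P : A -> Prop) : Prop :=
  [/\ is_ideal P, ~ P 1 &
      forall I J, is_ideal I -> is_ideal J ->
        (forall a b, I a -> J b -> P (a * b)) -> incl I P \/ incl J P].

(* Zariski closed sets V_A(X) of Spec A; subsets of Spec A are predicates
   on ideals *)
Definition VZ (X : A -> Prop) : (A -> Prop) -> Prop :=
  fun P => is_prime P /\ incl X P.

Definition closed_spec (U : (A -> Prop) -> Prop) : Prop :=
  exists X : A -> Prop, forall P, U P <-> VZ X P.

Definition Iof (U : (A -> Prop) -> Prop) : A -> Prop :=
  fun x => forall P, U P -> is_prime P -> P x.

Definition prime_rad (K : A -> Prop) : A -> Prop := Iof (VZ K).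

Definition ring_prime_rad : A -> Prop := prime_rad (fun x => x = 0).

Definition semiprime_ring : Prop := forall x, ring_prime_rad x -> x = 0.

Definition nilpotent_ideal (N : A -> Prop) : Prop :=
  exists n : nat, (0 < n)%N /\
    forall a : 'I_n -> A, (forall k, N (a k)) -> \prod_(k < n) a k = 0.

Definition right_ann (X : A -> Prop) : A -> Prop :=
  fun t => forall x, X x -> x * t = 0.
Definition left_ann (X : A -> Prop) : A -> Prop :=
  fun t => forall x, X x -> t * x = 0.

(* ACC on annihilators (given as the image of an annihilator operator) *)
Definition acc_ann (ann : (A -> Prop) -> A -> Prop) : Prop :=
  forall C : nat -> A -> Prop,
    (forall n, exists Y, forall t, C n t <-> ann Y t) ->
    (forall n, incl (C n) (C n.+1)) ->
    exists N, forall m, (N <= m)%N -> incl (C m) (C N).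

Definition independent_family (J : nat -> A -> Prop) : Prop :=
  forall n (x : 'I_n -> A), (forall k : 'I_n, J k (x k)) ->
    \sum_(k < n) x k = 0 -> forall k, x k = 0.

(* finite uniform (Goldie) dimension: no infinite direct sum of nonzero
   one-sided ideals *)
Definition no_inf_direct_sum (isid : (A -> Prop) -> Prop) : Prop :=
  forall J : nat -> A -> Prop,
    (forall n, isid (J n)) -> (forall n, exists x, J n x /\ x <> 0) ->
    ~ independent_family J.

Definition right_goldie : Prop :=
  no_inf_direct_sum is_right_ideal /\ acc_ann right_ann.
Definition left_goldie : Prop :=
  no_inf_direct_sum is_left_ideal /\ acc_ann left_ann.

End RingDefs.

(* Hypotheses of the paper, for the ring A: every factor ring of A is,
   up to isomorphism, a surjective image g : A -> T. *)
Definition semiprime_factors_goldie (A : pzRingType) : Prop :=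
  forall (T : pzRingType) (g : {rmorphism A -> T}), (forall t : T, exists a, g a = t) ->
    semiprime_ring T -> left_goldie T \/ right_goldie T.

Definition factors_nilpotent_radical (A : pzRingType) : Prop :=
  forall (T : pzRingType) (g : {rmorphism A -> T}), (forall t : T, exists a, g a = t) ->
    nilpotent_ideal (@ring_prime_rad T).



Section SubringDefs.
(* R is a subring of S via the injective ring morphism f *)
Variables (R S : pzRingType) (f : {rmorphism R -> S}).

(* S I : the left ideal of S generated by f(I) *)
Definition left_gen (I : R -> Prop) : S -> Prop :=
  fun x => exists n (s : 'I_n -> S) (i : 'I_n -> R),
    (forall k, I (i k)) /\ x = \sum_(k < n) s k * f (i k).

(* I^S = ann_S (S / S I) *)
Definition ext_ideal (I : R -> Prop) : S -> Prop :=
  fun s => forall x : S, left_gen I (s * x).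

Definition contract (P : S -> Prop) : R -> Prop := fun r => P (f r).

Definition lam (U : (S -> Prop) -> Prop) : (R -> Prop) -> Prop :=
  VZ (contract (Iof U)).
Definition rho (V : (R -> Prop) -> Prop) : (S -> Prop) -> Prop :=
  VZ (ext_ideal (Iof V)).

Definition left_adjoint_lam_rho : Prop :=
  forall (U : (S -> Prop) -> Prop) (V : (R -> Prop) -> Prop),
    closed_spec U -> closed_spec V ->
    ((forall Q, lam U Q -> V Q) <-> (forall P, U P -> rho V P)).

End SubringDefs.

(* Main.v *)
Require Import Defs.
From HB Require Import structures.
From mathcomp Require Import all_boot all_algebra.
From mathcomp Require Import boolp.
From Stdlib Require Import Classical ClassicalEpsilon.
From Stdlib Require List.
Set Implicit Arguments. Unset Strict Implicit. Unset Printing Implicit Defensive.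
Import GRing.Theory.
Local Open Scope ring_scope.

Section Ideal.
Variables (A : pzRingType) (K : A -> Prop) (HK : is_ideal K).
Lemma K0 : K 0. Proof. by case: HK. Qed.
Lemma KB a b : K a -> K b -> K (a - b). Proof. by case: HK => _ h _ _; apply: h. Qed.
Lemma KN a : K a -> K (- a).
Proof. move=> h; have -> : - a = 0 - a by rewrite sub0r. by apply: KB h; apply: K0. Qed.
Lemma KD a b : K a -> K b -> K (a + b).
Proof. by move=> ha hb; rewrite -[b]opprK; apply: KB => //; apply: KN. Qed.
Lemma KMl r a : K a -> K (r * a). Proof. by case: HK => _ _ h _; apply: h. Qed.
Lemma KMr r a : K a -> K (a * r). Proof. by case: HK => _ _ _ h; apply: h. Qed.
Lemma Ksum n (F : 'I_n -> A) : (forall k, K (F k)) -> K (\sum_(k < n) F k).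
Proof. move=> h; apply: (big_ind K) => //; [exact: K0 | exact: KD]. Qed.
End Ideal.

Fixpoint allP {T} (P : T -> Prop) (s : seq T) : Prop :=
  if s is x :: s' then P x /\ allP P s' else True.

Lemma allP_impl T (P Q : T -> Prop) (s : seq T) : (forall x, P x -> Q x) -> allP P s -> allP Q s.
Proof. move=> h; elim: s => //= x s IH [h1 h2]; split; [exact: h | exact: IH]. Qed.

Lemma allP_impl2 T (P Q W : T -> Prop) (s : seq T) :
  (forall x, P x -> Q x -> W x) -> allP P s -> allP Q s -> allP W s.
Proof. move=> h; elim: s => //= x s IH [h1 h2] [h3 h4]; split; [exact: h | exact: IH]. Qed.

Lemma allP_map T U (g : T -> U) (P : U -> Prop) (s : seq T) : allP P (map g s) <-> allP (fun x => P (g x)) s.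
Proof. by elim: s => //= x s IH; rewrite IH. Qed.

Section PL.
Variable A : pzRingType.

Fixpoint PL (Is : seq (A -> Prop)) (Z : A -> Prop) : A -> Prop :=
  if Is is J0 :: Is' then PL Is' (fun t => forall p, J0 p -> Z (p * t)) else Z.

Lemma PL_mono Is (Z Z' : A -> Prop) y :
  (forall x, Z x -> Z' x) -> PL Is Z y -> PL Is Z' y.
Proof.
elim: Is Z Z' y => [|J0 Is IH] Z Z' y h /=; first exact: h.
by apply: IH => x hx p hp; apply: h; apply: hx.
Qed.

Lemma PL_cap Is (Z : A -> Prop) :
  allP (@is_ideal A) Is -> (forall x, allP (fun J => J x) Is -> Z x) ->
  forall y, PL Is Z y.
Proof.
elim: Is Z => [|J0 Is IH] Z /=; first by move=> _ h y; apply: h.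
move=> [hJ0 hIs] h y; apply: IH => // x hx p hp; apply: h; split.
  by apply: KMr.
by apply: allP_impl2 hIs hx => J hJ; apply: KMl.
Qed.

Lemma PL_right Is (Z : A -> Prop) :
  (forall y, PL Is Z y) -> forall y, PL Is (fun z => forall x, Z (z * x)) y.
Proof.
elim: Is Z => [|J0 Is IH] Z /=; first by move=> h y x; apply: h.
move=> h y; have := IH _ h y; apply: PL_mono => z hz p hp x.
by rewrite -mulrA; apply: hz.
Qed.

Lemma prime_ideal (P : A -> Prop) : is_prime P -> is_ideal P.
Proof. by case. Qed.

Lemma PL_prime Is (P : A -> Prop) :
  is_prime P -> allP (@is_ideal A) Is -> (forall y, PL Is P y) ->
  exists J, List.In J Is /\ incl J P.
Proof.
move=> hP; have hPi := prime_ideal hP.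
elim: Is => [|J0 Is IH] /=.
  by move=> _ h; case: hP => _ h1 _; case: h1; apply: h.
move=> [hJ0 hIs] h.
case: (classic (incl J0 P)) => hc; first by exists J0; split => //; left.
have hP' : is_ideal (fun t => forall p, J0 p -> P (p * t)).
  split.
  - by move=> p _; rewrite mulr0; apply: K0.
  - by move=> a b ha hb p hp; rewrite mulrBr; apply: (KB hPi); [apply: ha | apply: hb].
  - by move=> r a ha p hp; rewrite mulrA; apply: ha; apply: KMr.
  - by move=> r a ha p hp; rewrite mulrA; apply: KMr => //; apply: ha.
case: hP => _ _ hpr.
case: (hpr _ _ hJ0 hP') => [p b hp hb| //| hinc]; first by apply: hb.
have [J [hJ hJP]] : exists J, List.In J Is /\ incl J P.
  apply: IH => // y; apply: PL_mono (h y) => x hx; apply: hinc; exact: hx.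
by exists J; split => //; right.
Qed.

Lemma prime_elem (P : A -> Prop) x y :
  is_prime P -> (forall a, P (x * a * y)) -> P x \/ P y.
Proof.
move=> hP h; have hPi := prime_ideal hP.
pose J := fun w => forall a, P (x * a * w).
pose I := fun u => forall w, J w -> P (u * w).
have hJ : is_ideal J.
  split.
  - by move=> a; rewrite mulr0; apply: K0.
  - by move=> a b ha hb c; rewrite mulrBr; apply: (KB hPi); [apply: ha | apply: hb].
  - by move=> r a ha c; rewrite mulrA -(mulrA x); apply: ha.
  - by move=> r a ha c; rewrite mulrA; apply: KMr => //; apply: ha.
have hI : is_ideal I.
  split.
  - by move=> w _; rewrite mul0r; apply: K0.
  - by move=> a b ha hb w hw; rewrite mulrBl; apply: (KB hPi); [apply: ha | apply: hb].
  - by move=> r a ha w hw; rewrite -mulrA; apply: KMl => //; apply: ha.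
  - move=> r a ha w hw; rewrite -mulrA; apply: ha.
    by move=> c; rewrite mulrA -(mulrA x); apply: hw.
case: hP => _ _ hpr.
case: (hpr _ _ hI hJ) => [a b ha hb|hi|hj]; first by apply: ha.
  left; apply: hi => w hw; have := hw 1; by rewrite mulr1.
right; apply: hj => a; exact: h.
Qed.

End PL.

Section PLmap.
Variables (A B : pzRingType) (f : {rmorphism A -> B}).

Lemma PL_map Is (Z : B -> Prop) y :
  PL Is Z (f y) -> PL (map (fun I x => I (f x)) Is) (fun x => Z (f x)) y.
Proof.
elim: Is Z y => [|J0 Is IH] Z y //= h.
have := IH _ _ h; apply: PL_mono => x hx q hq.
by rewrite rmorphM; apply: hx.
Qed.

Lemma preim_ideal (I : B -> Prop) : is_ideal I -> is_ideal (fun x => I (f x)).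
Proof.
move=> hI; split.
- by rewrite rmorph0; apply: K0.
- by move=> a b ha hb; rewrite rmorphB; apply: KB.
- by move=> r a ha; rewrite rmorphM; apply: KMl.
- by move=> r a ha; rewrite rmorphM; apply: KMr.
Qed.

Lemma preim_prime (I : B -> Prop) : (forall t, exists a, f a = t) ->
  is_prime I -> is_prime (fun x => I (f x)).
Proof.
move=> fs [hI h1 hpr]; split; first exact: preim_ideal.
  by rewrite rmorph1.
move=> I1 J1 hI1 hJ1 hprod.
pose gI := fun t => exists a, I1 a /\ f a = t.
pose gJ := fun t => exists a, J1 a /\ f a = t.
have himg : forall I2, is_ideal I2 -> is_ideal (fun t => exists a, I2 a /\ f a = t).
  move=> I2 hI2; split.
  - by exists 0; split; [apply: K0 | rewrite rmorph0].
  - by move=> _ _ [a [ha <-]] [b [hb <-]]; exists (a - b); split; [apply: KB | rewrite rmorphB].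
  - move=> r _ [a [ha <-]]; have [c <-] := fs r.
    by exists (c * a); split; [apply: KMl | rewrite rmorphM].
  - move=> r _ [a [ha <-]]; have [c <-] := fs r.
    by exists (a * c); split; [apply: KMr | rewrite rmorphM].
case: (hpr gI gJ (himg _ hI1) (himg _ hJ1)).
- by move=> _ _ [a [ha <-]] [b [hb <-]]; rewrite -rmorphM; apply: hprod.
- by move=> h; left => a ha; apply: h; exists a.
- by move=> h; right => a ha; apply: h; exists a.
Qed.
End PLmap.

Section LG.
Variables (R S : pzRingType) (f : {rmorphism R -> S}).
Implicit Types (J : R -> Prop).

Lemma LG0 J : left_gen f J 0.
Proof. by exists 0%N, (fun _ => 0), (fun _ => 0); split => [[]//|]; rewrite big_ord0. Qed.

Lemma LG1 J s i : J i -> left_gen f J (s * f i).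
Proof.
move=> hi; exists 1%N, (fun _ => s), (fun _ => i); split => // .
by rewrite big_ord1.
Qed.

Lemma LGD J x y : left_gen f J x -> left_gen f J y -> left_gen f J (x + y).
Proof.
move=> [n [s [i [hi ->]]]] [m [s' [i' [hi' ->]]]].
exists (n + m)%N, (fun k => match split k with inl a => s a | inr b => s' b end),
  (fun k => match split k with inl a => i a | inr b => i' b end).
split; first by move=> k; case: (split k).
rewrite big_split_ord /=; congr (_ + _); apply: eq_bigr => k _.
  by rewrite -[lshift _ _]/(unsplit (inl k)) unsplitK.
by rewrite -[rshift _ _]/(unsplit (inr k)) unsplitK.
Qed.

Lemma LGMl J r x : left_gen f J x -> left_gen f J (r * x).
Proof.
move=> [n [s [i [hi ->]]]]; exists n, (fun k => r * s k), i; split => //.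
by rewrite mulr_sumr; apply: eq_bigr => k _; rewrite mulrA.
Qed.

Lemma LGN J x : left_gen f J x -> left_gen f J (- x).
Proof. by move=> h; rewrite -mulN1r; apply: LGMl. Qed.

Lemma LGsum J n (F : 'I_n -> S) : (forall k, left_gen f J (F k)) -> left_gen f J (\sum_(k < n) F k).
Proof. move=> h; apply: (big_ind (left_gen f J)) => //; [exact: LG0 | exact: LGD]. Qed.

Lemma LG_mono J J' x : incl J J' -> left_gen f J x -> left_gen f J' x.
Proof. by move=> h [n [s [i [hi ->]]]]; exists n, s, i; split => // k; apply: h. Qed.

Lemma LG_in (P : S -> Prop) x : is_ideal P -> left_gen f (contract f P) x -> P x.
Proof. by move=> hP [n [s [i [hi ->]]]]; apply: (Ksum hP) => k; apply: (KMl hP); apply: hi. Qed.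

Lemma ext_ideal_ideal J : is_ideal (ext_ideal f J).
Proof.
split.
- by move=> x; rewrite mul0r; apply: LG0.
- by move=> a b ha hb x; rewrite mulrBl; apply: LGD (ha x) _; apply: LGN.
- by move=> r a ha x; rewrite -mulrA; apply: LGMl.
- by move=> r a ha x; rewrite -mulrA.
Qed.

Lemma ext_mono J J' : incl J J' -> incl (ext_ideal f J) (ext_ideal f J').
Proof. by move=> h s hs x; apply: LG_mono h (hs x). Qed.

Lemma Zlemma (Q J : R -> Prop) s w :
  ext_ideal f Q s -> left_gen f (fun t => forall q, Q q -> J (q * t)) w ->
  left_gen f J (s * w).
Proof.
move=> hs [n [u [t [ht ->]]]]; rewrite mulr_sumr; apply: LGsum => k.
have [m [v [q [hq e]]]] := hs (u k).
rewrite mulrA e mulr_suml; apply: LGsum => j.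
by rewrite -mulrA -rmorphM; apply: LG1; apply: ht.
Qed.

Lemma PL_ext Qs (J : R -> Prop) y :
  left_gen f (PL Qs J) y -> PL (map (ext_ideal f) Qs) (left_gen f J) y.
Proof.
elim: Qs J y => [|Q Qs IH] J y //= h.
have := IH _ _ h; apply: PL_mono => w hw s hs; exact: Zlemma hs hw.
Qed.

Lemma LG_all (Z : R -> Prop) y : (forall x, Z x) -> left_gen f Z y.
Proof. by move=> h; rewrite -[y]mulr1 -(rmorph1 f); apply: LG1. Qed.
End LG.

Section Goldie.
Variable A : pzRingType.

Lemma maxp (ann : (A -> Prop) -> A -> Prop) (X : Type) (Pr : X -> Prop) (F : X -> A -> Prop) x0 :
  acc_ann ann -> (forall x, Pr x -> exists Y, forall t, F x t <-> ann Y t) -> Pr x0 ->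
  exists x, Pr x /\ forall y, Pr y -> incl (F x) (F y) -> incl (F y) (F x).
Proof.
move=> hacc hF h0; apply: NNPP => hno.
have step : forall x : {x | Pr x}, {y : {x | Pr x} | incl (F (sval x)) (F (sval y)) /\ ~ incl (F (sval y)) (F (sval x))}.
  move=> [x hx]; apply: constructive_indefinite_description.
  apply: NNPP => hn; apply: hno; exists x; split => // y hy h1.
  apply: NNPP => h2; apply: hn; by exists (exist _ y hy).
pose c := fix c (n : nat) : {x | Pr x} := if n is n'.+1 then sval (step (c n')) else exist _ x0 h0.
have [N hN] := hacc (fun n => F (sval (c n))) (fun n => hF _ (svalP (c n)))
   (fun n => (svalP (step (c n))).1).
by apply: (svalP (step (c N))).2; exact: (hN N.+1 (leqnSn N)).
Qed.

Hypothesis SP : semiprime_ring A.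

Lemma semiprime_elem (z : A) : (forall a, z * a * z = 0) -> z = 0.
Proof.
move=> h; apply: SP => P [hP _] _.
have [] := prime_elem (x := z) (y := z) hP; try done.
move=> a; rewrite h; apply: K0; exact: prime_ideal.
Qed.

Lemma ann_ideal (I : A -> Prop) : is_ideal I -> is_ideal (right_ann I).
Proof.
move=> hI; split.
- by move=> x _; rewrite mulr0.
- by move=> a b ha hb x hx; rewrite mulrBr ha ?hb ?subr0.
- by move=> r a ha x hx; rewrite mulrA ha //; apply: KMr.
- by move=> r a ha x hx; rewrite mulrA ha ?mul0r.
Qed.

Lemma ann_lr (I : A -> Prop) (t : A) : is_ideal I -> right_ann I t <-> left_ann I t.
Proof.
move=> hI; split => h x hx.
  apply: semiprime_elem => a.
  have -> : t * x * a * (t * x) = t * ((x * a) * t) * x by rewrite !mulrA.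
  by rewrite h ?mulr0 ?mul0r //; apply: KMr.
apply: semiprime_elem => a.
have -> : x * t * a * (x * t) = x * (t * (a * x)) * t by rewrite !mulrA.
by rewrite h ?mulr0 ?mul0r //; apply: KMl.
Qed.

Lemma cap0 (I : A -> Prop) (z : A) : is_ideal I -> I z -> right_ann I z -> z = 0.
Proof.
move=> hI hz h; apply: semiprime_elem => a.
by rewrite h //; apply: KMr.
Qed.


Lemma maxp2 (X : Type) (Pr : X -> Prop) (F : X -> A -> Prop) x0 :
  (acc_ann (@right_ann A) \/ acc_ann (@left_ann A)) ->
  (forall x, Pr x -> exists Y, is_ideal Y /\ forall t, F x t <-> right_ann Y t) -> Pr x0 ->
  exists x, Pr x /\ forall y, Pr y -> incl (F x) (F y) -> incl (F y) (F x).
Proof.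
move=> [hacc|hacc] hF h0; apply: (maxp hacc) h0 => x hx.
  by have [Y [_ hY]] := hF x hx; exists Y.
have [Y [hYi hY]] := hF x hx; exists Y => t; rewrite hY; exact: ann_lr.
Qed.

Definition good (I : A -> Prop) := is_ideal I /\ is_prime (right_ann I).
Definition Mof (L : seq (A -> Prop)) (t : A) := allP (fun I => right_ann I t) L.

Lemma Mof_ideal L : allP good L -> is_ideal (Mof L).
Proof.
elim: L => [|I L IH] /=; first by split.
move=> [[hI _] hL]; have hM := IH hL; have hr := ann_ideal hI.
split.
- by split; [apply: K0 | apply: (K0 hM)].
- by move=> a b [ha1 ha2] [hb1 hb2]; split; [apply: (KB hr) | apply: (KB hM)].
- by move=> r a [ha1 ha2]; split; [apply: (KMl hr) | apply: (KMl hM)].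
- by move=> r a [ha1 ha2]; split; [apply: (KMr hr) | apply: (KMr hM)].
Qed.

Lemma goldie_core : (acc_ann (@right_ann A) \/ acc_ann (@left_ann A)) ->
  exists Ls : seq (A -> Prop), allP (@is_prime A) Ls /\ forall x, allP (fun P => P x) Ls -> x = 0.
Proof.
move=> hacc.
have [L [hL hmax]] := maxp2 (Pr := allP good) (F := fun L => right_ann (Mof L)) (x0 := [::]) hacc
  (fun L hL => ex_intro _ (Mof L) (conj (Mof_ideal hL) (fun t => iff_refl _))) I.
case: (classic (exists z, Mof L z /\ z <> 0)) => [[z [hz hz0]] | hno]; last first.
  exists (map (@right_ann A) L); split.
    by apply/allP_map; apply: allP_impl hL => J [].
  move=> x /allP_map hx; apply: NNPP => hx0; apply: hno; by exists x.
set M := Mof L; have hM : is_ideal M := Mof_ideal hL.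
pose Pr := fun I => is_ideal I /\ incl I M /\ exists z, I z /\ z <> 0.
have [I' [[hI' [hI'M [z' [hz' hz'0]]]] hmaxI]] :=
  maxp2 (Pr := Pr) (F := @right_ann A) (x0 := M) hacc
    (fun I hI => ex_intro _ I (conj hI.1 (fun t => iff_refl _)))
    (conj hM (conj (fun x h => h) (ex_intro _ z (conj hz hz0)))).
have hprime : is_prime (right_ann I').
  split; first exact: ann_ideal.
    by move=> h; apply: hz'0; rewrite -[z']mulr1; apply: h.
  move=> B C hB hC hBC.
  case: (classic (incl B (right_ann I'))) => hc; [by left | right].
  have [b [hb hnb]] : exists b, B b /\ ~ right_ann I' b.
    apply: NNPP => hn; apply: hc => b hb; apply: NNPP => hnb; apply: hn; by exists b.
  have [x [hx hxb]] : exists x, I' x /\ x * b <> 0.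
    apply: NNPP => hn; apply: hnb => x hx; apply: NNPP => hxb; apply: hn; by exists x.
  pose I2 := fun u => I' u /\ forall c, C c -> u * c = 0.
  have hI2 : is_ideal I2.
    split.
    - by split; [apply: K0 | move=> c _; rewrite mul0r].
    - move=> a a' [ha1 ha2] [hb1 hb2]; split; first exact: (KB hI').
      by move=> c hc'; rewrite mulrBl ha2 ?hb2 ?subr0.
    - move=> r a [ha1 ha2]; split; first exact: (KMl hI').
      by move=> c hc'; rewrite -mulrA ha2 ?mulr0.
    - move=> r a [ha1 ha2]; split; first exact: (KMr hI').
      by move=> c hc'; rewrite -mulrA ha2 //; apply: (KMl hC).
  have hPr2 : Pr I2.
    split => //; split; first by move=> u [hu _]; apply: hI'M.
    exists (x * b); split => //; split; first exact: (KMr hI').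
    by move=> c hc'; rewrite -mulrA; apply: (hBC b c hb hc').
  have h12 : incl (right_ann I') (right_ann I2) by move=> t ht u [hu _]; apply: ht.
  have h21 := hmaxI I2 hPr2 h12.
  by move=> c hc'; apply: h21 => u [_ hu]; apply: hu.
have hL' : allP good (I' :: L) by split.
have hinc : incl (right_ann M) (right_ann (Mof (I' :: L))).
  by move=> t ht m [_ hm]; apply: ht.
have hback := hmax _ hL' hinc.
have hM' : is_ideal (Mof (I' :: L)) := Mof_ideal hL'.
have hMr : incl M (right_ann I').
  move=> t ht x hx.
  have hxl : left_ann (Mof (I' :: L)) x by move=> m [hm _]; apply: hm.
  have hxr : right_ann (Mof (I' :: L)) x by apply/(ann_lr _ hM').
  have hxM : right_ann M x := hback _ hxr.
  by move/(ann_lr _ hM): hxM => hxM; apply: hxM.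
by exfalso; apply: hz'0; apply: (cap0 hI' hz'); apply: hMr; apply: hI'M.
Qed.

End Goldie.


Section Quot.
Local Open Scope quotient_scope.
Variables (A : pzRingType) (K : A -> Prop) (HK : is_ideal K).

Definition qrel (a b : A) : bool := `[< K (a - b) >].

Lemma qrelP a b : reflect (K (a - b)) (qrel a b).
Proof. exact: asboolP. Qed.

Lemma qrel_refl : reflexive qrel.
Proof. by move=> a; apply/qrelP; rewrite subrr; apply: (K0 HK). Qed.
Lemma qrel_sym : symmetric qrel.
Proof.
move=> a b; apply/qrelP/qrelP => h; by rewrite -opprB; apply: (KN HK).
Qed.
Lemma qrel_trans : transitive qrel.
Proof.
move=> b a c /qrelP h1 /qrelP h2; apply/qrelP.
by have := KD HK h1 h2; rewrite addrA subrK.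
Qed.

Canonical qrel_equiv := EquivRel qrel qrel_refl qrel_sym qrel_trans.
Definition Q := {eq_quot qrel_equiv}.
HB.instance Definition _ := Choice.on Q.
Definition qpi (a : A) : Q := \pi_Q a.

Lemma qpiP a b : qpi a = qpi b <-> K (a - b).
Proof. split. by move/eqquotP/qrelP. by move=> h; apply/eqquotP/qrelP. Qed.

Lemma qpi_repr (x : Q) : qpi (repr x) = x.
Proof. exact: reprK. Qed.

Lemma qpi_surj (x : Q) : exists a, qpi a = x.
Proof. by exists (repr x); apply: qpi_repr. Qed.

Lemma qrepr a : K (repr (qpi a) - a).
Proof. by apply/qpiP; rewrite qpi_repr. Qed.

Definition qzero : Q := qpi 0.
Definition qopp (x : Q) : Q := qpi (- repr x).
Definition qadd (x y : Q) : Q := qpi (repr x + repr y).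
Definition qone : Q := qpi 1.
Definition qmul (x y : Q) : Q := qpi (repr x * repr y).

Lemma qopp_pi a : qopp (qpi a) = qpi (- a).
Proof. apply/qpiP; rewrite -opprD; apply: (KN HK); exact: qrepr. Qed.
Lemma qadd_pi a b : qadd (qpi a) (qpi b) = qpi (a + b).
Proof.
apply/qpiP; have := KD HK (qrepr a) (qrepr b).
by congr K; rewrite opprD !addrA; congr (_ + _); rewrite -!addrA; congr (_ + _); rewrite addrC.
Qed.
Lemma qmul_pi a b : qmul (qpi a) (qpi b) = qpi (a * b).
Proof.
apply/qpiP.
have e : repr (qpi a) * repr (qpi b) - a * b =
  (repr (qpi a) - a) * repr (qpi b) + a * (repr (qpi b) - b).
  by rewrite mulrBl mulrBr addrA subrK.
by rewrite e; apply: (KD HK); [apply: (KMr HK) | apply: (KMl HK)]; apply: qrepr.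
Qed.

Lemma qind (P : Q -> Prop) : (forall a, P (qpi a)) -> forall x, P x.
Proof. by move=> h x; rewrite -(qpi_repr x). Qed.

Lemma qaddA : associative qadd.
Proof. by elim/qind=> a; elim/qind=> b; elim/qind=> c; rewrite !qadd_pi addrA. Qed.
Lemma qaddC : commutative qadd.
Proof. by elim/qind=> a; elim/qind=> b; rewrite !qadd_pi addrC. Qed.
Lemma qadd0 : left_id qzero qadd.
Proof. by elim/qind=> a; rewrite qadd_pi add0r. Qed.
Lemma qaddN : left_inverse qzero qopp qadd.
Proof. by elim/qind=> a; rewrite qopp_pi qadd_pi addNr. Qed.

HB.instance Definition _ := GRing.isZmodule.Build Q qaddA qaddC qadd0 qaddN.

Lemma qaddE (x y : Q) : x + y = qadd x y. Proof. by []. Qed.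

Lemma qmulA : associative qmul.
Proof. by elim/qind=> a; elim/qind=> b; elim/qind=> c; rewrite !qmul_pi mulrA. Qed.
Lemma qmul1 : left_id qone qmul.
Proof. by elim/qind=> a; rewrite qmul_pi mul1r. Qed.
Lemma qmulr1 : right_id qone qmul.
Proof. by elim/qind=> a; rewrite qmul_pi mulr1. Qed.
Lemma qmulDl : left_distributive qmul (@GRing.add Q).
Proof. by elim/qind=> a; elim/qind=> b; elim/qind=> c; rewrite !qaddE qadd_pi !qmul_pi qadd_pi mulrDl. Qed.
Lemma qmulDr : right_distributive qmul (@GRing.add Q).
Proof. by elim/qind=> a; elim/qind=> b; elim/qind=> c; rewrite !qaddE qadd_pi !qmul_pi qadd_pi mulrDr. Qed.

HB.instance Definition _ := GRing.Zmodule_isPzRing.Build Q qmulA qmul1 qmulr1 qmulDl qmulDr.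

Lemma qpi_is_mono : monoid_morphism qpi.
Proof. by split => // a b; rewrite /= -qmul_pi. Qed.
Lemma qpi_is_add : nmod_morphism qpi.
Proof. by split => // a b; rewrite /= -qadd_pi. Qed.
HB.instance Definition _ := GRing.isNmodMorphism.Build A Q qpi qpi_is_add.
HB.instance Definition _ := GRing.isMonoidMorphism.Build A Q qpi qpi_is_mono.
Definition qpim : {rmorphism A -> Q} := qpi.
End Quot.

Section FinPrimes.
Variables (A : pzRingType) (K : A -> Prop) (HK : is_ideal K).
Let g := qpim HK.
Lemma g_surj : forall t : Q HK, exists a, g a = t.
Proof. exact: qpi_surj. Qed.
Lemma gE a b : g a = g b <-> K (a - b).
Proof. exact: qpiP. Qed.
Lemma g0 a : g a = 0 <-> K a.
Proof. by rewrite -(rmorph0 g) gE subr0. Qed.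

Lemma img_prime (P : A -> Prop) : is_prime P -> incl K P ->
  is_prime (fun t => exists p, P p /\ g p = t).
Proof.
move=> hP hKP; have hPi := prime_ideal hP; case: (hP) => _ h1 hpr.
split.
- split.
  + by exists 0; split; [apply: (K0 hPi) | rewrite rmorph0].
  + by move=> _ _ [a [ha <-]] [b [hb <-]]; exists (a - b); split; [apply: (KB hPi) | rewrite rmorphB].
  + move=> r _ [a [ha <-]]; have [c <-] := g_surj r.
    by exists (c * a); split; [apply: (KMl hPi) | rewrite rmorphM].
  + move=> r _ [a [ha <-]]; have [c <-] := g_surj r.
    by exists (a * c); split; [apply: (KMr hPi) | rewrite rmorphM].
- move=> [p [hp]]; rewrite -(rmorph1 g) gE => /hKP hp1; apply: h1.
  have -> : (1 : A) = p - (p - 1) by rewrite opprB addrC subrK.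
  exact: (KB hPi).
- move=> I J hI hJ hIJ.
  case: (hpr _ _ (preim_ideal g hI) (preim_ideal g hJ)).
  + move=> a b ha hb; have [p [hp e]] := hIJ _ _ ha hb.
    rewrite -rmorphM in e; move/gE/hKP: e => e.
    have -> : a * b = p - (p - a * b) by rewrite opprB addrC subrK.
    exact: (KB hPi).
  + by move=> h; left => t ht; have [c hc] := g_surj t; exists c; split; [apply: h; rewrite hc | ].
  + by move=> h; right => t ht; have [c hc] := g_surj t; exists c; split; [apply: h; rewrite hc | ].
Qed.

Lemma quot_semiprime : (forall x, prime_rad K x -> K x) -> semiprime_ring (Q HK).
Proof.
move=> HKs t ht; have [a ea] := g_surj t; subst t; apply/g0; apply: HKs => P [hP hKP] _.
have hPi := prime_ideal hP.
have hIP := img_prime hP hKP.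
have [p [hp e]] : exists p, P p /\ g p = g a.
  apply: (ht (fun t => exists p, P p /\ g p = t)) => //.
  by split => // x ->; exists 0; split; [apply: (K0 hPi) | rewrite rmorph0].
move/gE/hKP: e => e.
have -> : a = p - (p - a) by rewrite opprB addrC subrK.
exact: (KB hPi).
Qed.

Lemma fin_primes : semiprime_factors_goldie A -> (forall x, prime_rad K x -> K x) ->
  exists Ps : seq (A -> Prop), allP (@is_prime A) Ps /\ allP (incl K) Ps /\ forall y, PL Ps K y.
Proof.
move=> HG HKs; have sp := quot_semiprime HKs.
have hacc : acc_ann (@right_ann (Q HK)) \/ acc_ann (@left_ann (Q HK)).
  by case: (HG _ g g_surj sp) => [[_ h]|[_ h]]; [right | left].
have [Ls [hLs h0]] := goldie_core sp hacc.
exists (map (fun P x => P (g x)) Ls); split; last split.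
- apply/allP_map; apply: allP_impl hLs => P hP; exact: preim_prime g_surj hP.
- apply/allP_map; apply: allP_impl hLs => P hP x /g0 ->; apply: K0; exact: prime_ideal.
- apply: PL_cap.
    apply/allP_map; apply: allP_impl hLs => P hP; apply: preim_ideal; exact: prime_ideal.
  by move=> x /allP_map hx; apply/g0; apply: h0.
Qed.
End FinPrimes.

Lemma PL_nseq (A : pzRingType) (N Z : A -> Prop) n :
  (forall b : 'I_n -> A, (forall k, N (b k)) -> forall y, Z (\prod_(k < n) b k * y)) ->
  forall y, PL (nseq n N) Z y.
Proof.
elim: n Z => [|n IH] Z h y /=.
  by have := h (fun _ => 0) (fun k => match k with Ordinal _ hk => False_ind _ (notF hk) end) y; rewrite big_ord0 mul1r.
apply: IH => b hb y' p hp.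
pose b' := fun k : 'I_n.+1 => if unlift ord0 k is Some j then b j else p.
have hb' : forall k, N (b' k) by move=> k; rewrite /b'; case: (unlift ord0 k).
have := h b' hb' y'; rewrite big_ord_recl /b' unlift_none mulrA.
congr (Z (_ * _ * _)); apply: eq_bigr => i _; by rewrite liftK.
Qed.

Lemma nil_PL (A : pzRingType) (J : A -> Prop) (HJ : is_ideal J) :
  factors_nilpotent_radical A -> exists n, forall y, PL (nseq n (prime_rad J)) J y.
Proof.
move=> HN; have [n [hn hprod]] := HN _ (qpim HJ) (@g_surj _ _ HJ).
exists n; apply: PL_nseq => b hb y; apply: (KMr HJ); apply/(@g0 _ _ HJ).
rewrite rmorph_prod; apply: hprod => k P [hP _] hP'.
have := hb k (fun x => P (qpim HJ x)); apply.
  split; first exact: preim_prime (@g_surj _ _ HJ) hP.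
  by move=> x /(@g0 _ _ HJ) ->; apply: (K0 (prime_ideal hP)).
exact: preim_prime (@g_surj _ _ HJ) hP.
Qed.

Lemma In_nseq T (x y : T) n : List.In x (nseq n y) -> x = y.
Proof. by elim: n => //= n IH [->|/IH]. Qed.

Lemma allP_nseq T (P : T -> Prop) n x : P x -> allP P (nseq n x).
Proof. by move=> h; elim: n => //= n ->. Qed.

Lemma allP_In T (P : T -> Prop) (s : seq T) x : allP P s -> List.In x s -> P x.
Proof. by elim: s => //= y s IH [h1 h2] [<-|/IH]; [| apply]. Qed.

Lemma Iof_ideal (A : pzRingType) (U : (A -> Prop) -> Prop) : is_ideal (Iof U).
Proof.
split.
- by move=> P _ hP; apply: (K0 (prime_ideal hP)).
- by move=> a b ha hb P hU hP; apply: (KB (prime_ideal hP)); [apply: ha | apply: hb].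
- by move=> r a ha P hU hP; apply: (KMl (prime_ideal hP)); apply: ha.
- by move=> r a ha P hU hP; apply: (KMr (prime_ideal hP)); apply: ha.
Qed.

Lemma Iof_semi (A : pzRingType) (U : (A -> Prop) -> Prop) x : prime_rad (Iof U) x -> Iof U x.
Proof. by move=> h P hU hP; apply: h => //; split => // y hy; apply: hy. Qed.

Lemma Iof_VZ (A : pzRingType) (Q : A -> Prop) x : is_prime Q -> Iof (VZ Q) x <-> Q x.
Proof. move=> hQ; split => [h|h P [hP hQP] _]; last exact: hQP. by apply: h => //; split. Qed.

Lemma contract_ideal (R S : pzRingType) (f : {rmorphism R -> S}) P : is_ideal P -> is_ideal (contract f P).
Proof. exact: preim_ideal. Qed.

Unset Implicit Arguments.

Theorem lemma3p13 (R S : pzRingType) (f : {rmorphism R -> S}) :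
  injective f ->
  semiprime_factors_goldie R -> semiprime_factors_goldie S ->
  factors_nilpotent_radical R -> factors_nilpotent_radical S ->
  (left_adjoint_lam_rho f <->
   (forall (P : S -> Prop) (Q : R -> Prop), is_prime P -> is_prime Q ->
      incl (ext_ideal f Q) P -> incl Q (prime_rad (contract f P)))).
Proof.
move=> _ HGR HGS HNR _; split.
- move=> adj P Q hP hQ hext x hx Q' [hQ' hPQ'] _.
  have hU : closed_spec (VZ P) by exists P.
  have hV : closed_spec (VZ Q) by exists Q.
  have := (adj _ _ hU hV).2.
  have H1 : forall P0, VZ P P0 -> rho f (VZ Q) P0.
    move=> P0 [hP0 hPP0]; split => // s hs; apply: hPP0; apply: hext.
    by apply: ext_mono hs => y /(Iof_VZ _ hQ).
  move=> /(_ H1) H2.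
  have [_ hQQ'] := H2 Q' (conj hQ' (fun r hr => hPQ' r (hr P (conj hP (fun _ h => h)) hP))).
  exact: hQQ'.
- move=> HC U V [X hX] [Y hY]; split.
  + move=> H P hUP; have hP : is_prime P by case/hX: hUP.
    split => //.
    have step1 : incl (Iof V) (prime_rad (contract f P)).
      move=> x hx Q' [hQ' hPQ'] _; apply: hx => //; apply: H; split => // r hr.
      by apply: hPQ'; apply: hr.
    have hJ := contract_ideal f (prime_ideal hP).
    have [n hn] := nil_PL hJ HNR.
    set N := prime_rad (contract f P) in step1 hn.
    have hE : forall y, PL (nseq n (ext_ideal f N)) P y.
      move=> y; have := PL_ext (@LG_all _ _ f _ y hn).
      rewrite map_nseq; apply: PL_mono => z; exact: LG_in (prime_ideal hP).
    have [E0 [hE0 hIP]] := PL_prime hP (allP_nseq n (ext_ideal_ideal f N)) hE; rewrite (In_nseq hE0) in hIP.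
    by move=> s hs; apply: hIP; apply: ext_mono hs.
  + move=> H Q [hQ hQU].
    apply/hY; split => //.
    suff hIV : incl (Iof V) Q.
      by move=> y hy; apply: hIV => P' hVP' _; case/hY: hVP' => _; apply.
    have [Ps [hPsp [hPsK hPsPL]]] := fin_primes (Iof_ideal U) HGS (@Iof_semi _ U).
    have hc : forall y, PL (map (contract f) Ps) Q y.
      move=> y; have := PL_map (hPsPL (f y)); apply: PL_mono => x; exact: hQU.
    have hci : allP (@is_ideal R) (map (contract f) Ps).
      by apply/allP_map; apply: allP_impl hPsp => P hP; apply: contract_ideal; apply: prime_ideal.
    have [C [/List.in_map_iff [P1 [<- hP1in]] hP1Q]] := PL_prime hQ hci hc.
    have hP1 : is_prime P1 /\ incl (Iof U) P1.
      by split; [apply: (allP_In hPsp) | apply: (allP_In hPsK)].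
    have [Qs [hQsp [hQsK hQsPL]]] := fin_primes (Iof_ideal V) HGR (@Iof_semi _ V).
    have hext : forall y, PL (map (ext_ideal f) Qs) P1 y.
      have h1 : forall y, PL (map (ext_ideal f) Qs) (left_gen f (Iof V)) y.
        by move=> y; apply: PL_ext; apply: LG_all; apply: hQsPL.
      move=> y; have := PL_right h1 y; apply: PL_mono => z hz; apply: hP1.2.
      move=> P hUP hP; apply: (H P hUP).2; exact: hz.
    have hei : allP (@is_ideal S) (map (ext_ideal f) Qs).
      by apply/allP_map; apply: allP_impl hQsp => Q0 _; apply: ext_ideal_ideal.
    have [E [/List.in_map_iff [Q1 [<- hQ1in]] hQ1P]] := PL_prime hP1.1 hei hext.
    have hQ1 : is_prime Q1 := allP_In hQsp hQ1in.
    have hQ1K : incl (Iof V) Q1 := allP_In hQsK hQ1in.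
    have hC := HC P1 Q1 hP1.1 hQ1 hQ1P.
    move=> x hx; apply: (hC x (hQ1K x hx)) => //; split => //.
Qed.
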